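(* Let $\mathcal A$ be finite, $r,\hat r:\mathcal A\to[0,1]$, $\eta>0$, $\pi^{\mathrm{ref}}\in\Delta(\mathcal A)$ with $\pi^{\mathrm{ref}}(a)>0$ for all $a$, and $g=r-\hat r$. For $u\in[0,1]$ let $r_u=(1-u)r+u\hat r$ and let $\pi_u$ be the unique maximizer over $\Delta(\mathcal A)$ of $\pi\mapsto\sum_ar_u(a)\pi(a)-\eta^{-1}\mathrm{KL}(\pi^{\mathrm{ref}}\|\pi)$. Define $w_u(a)=\pi_u(a)/\pi^{\mathrm{ref}}(a)$, $Z_u=\sum_a\pi_u(a)^2/\pi^{\mathrm{ref}}(a)$, the probability distribution $\mu_u(a)=\frac{\pi_u(a)^2}{\pi^{\mathrm{ref}}(a)}/Z_u$, and $$F(u)=\frac\eta2\left(\sum_a\frac{\pi_u(a)^2}{\pi^{\mathrm{ref}}(a)}g(a)^2-\frac{\Big(\sum_a\frac{\pi_u(a)^2}{\pi^{\mathrm{ref}}(a)}g(a)\Big)^2}{\sum_a\frac{\pi_u(a)^2}{\pi^{\mathrm{ref}}(a)}}\right).$$ Then for every $u\in(0,1)$, $$F'(u)=-\eta^2Z_u\,\mathbb E_{a\sim\mu_u}\Big[w_u(a)\big(g(a)-\mathbb E_{a'\sim\mu_u}g(a')\big)^3\Big].$$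
   Context: $\mathrm{KL}(P\|Q)=\sum_aP(a)\log(P(a)/Q(a))$. *)

(* Defs.v *)
From HB Require Import structures.
From mathcomp Require Import all_boot all_order all_algebra.
From mathcomp Require Import all_classical all_reals all_analysis.
Set Implicit Arguments. Unset Strict Implicit. Unset Printing Implicit Defensive.
Import Order.TTheory GRing.Theory Num.Theory.
Import numFieldNormedType.Exports.
Local Open Scope ring_scope.

Section KLDefs.
Variables (R : realType) (A : finType).

Definition in_simplex (p : A -> R) : Prop :=
  (forall a, 0 <= p a) /\ \sum_(a : A) p a = 1.

Definition KL (P Q : A -> R) : R := \sum_(a : A) P a * ln (P a / Q a).

Definition kl_objective (eta : R) (piref ru pi : A -> R) : R :=
  \sum_(a : A) ru a * pi a - eta^-1 * KL piref pi.

(* Since piref > 0,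
   KL(piref || pi) = +oo whenever pi has a zero entry, so the objective is
   -oo there; hence maximizers have full support and it suffices to compare
   against full-support competitors (the effective domain). *)
Definition is_kl_maximizer (eta : R) (piref ru pi : A -> R) : Prop :=
  [/\ in_simplex pi, (forall a, 0 < pi a) &
      forall q, in_simplex q -> (forall a, 0 < q a) ->
        kl_objective eta piref ru q <= kl_objective eta piref ru pi].

Definition r_interp (r rhat : A -> R) (u : R) : A -> R :=
  fun a => (1 - u) * r a + u * rhat a.

Definition w_of (piref pi : A -> R) (a : A) : R := pi a / piref a.

Definition Z_of (piref pi : A -> R) : R := \sum_(a : A) pi a ^+ 2 / piref a.

Definition mu_of (piref pi : A -> R) (a : A) : R :=
  (pi a ^+ 2 / piref a) / Z_of piref pi.

Definition F_of (eta : R) (piref pi g : A -> R) : R :=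
  eta / 2 * (\sum_(a : A) pi a ^+ 2 / piref a * g a ^+ 2
             - (\sum_(a : A) pi a ^+ 2 / piref a * g a) ^+ 2
               / (\sum_(a : A) pi a ^+ 2 / piref a)).

End KLDefs.

(* Main.v *)
Require Import Defs.
From HB Require Import structures.
From mathcomp Require Import all_boot all_order all_algebra.
From mathcomp Require Import all_classical all_reals all_analysis.
From mathcomp Require Import ring lra.
Import Order.TTheory GRing.Theory Num.Theory.
Import numFieldNormedType.Exports.
Local Open Scope ring_scope.


Section W.
Context {R : realType}.

Lemma xdcst (k x : R) : is_derive x 1 (fun _ : R => k) 0.
Proof. exact: is_derive_cst. Qed.
Lemma xdid (x : R) : is_derive x 1 (fun y : R => y) 1.
Proof. exact: is_derive_id. Qed.
Lemma xdadd {f g : R -> R} {x df dg : R} : is_derive x 1 f df -> is_derive x 1 g dg ->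
  is_derive x 1 (fun y => f y + g y) (df + dg).
Proof. move=> H1 H2; exact: is_deriveD. Qed.
Lemma xdsub {f g : R -> R} {x df dg : R} : is_derive x 1 f df -> is_derive x 1 g dg ->
  is_derive x 1 (fun y => f y - g y) (df - dg).
Proof. move=> H1 H2; exact: is_deriveB. Qed.
Lemma xdmul {f g : R -> R} {x df dg : R} : is_derive x 1 f df -> is_derive x 1 g dg ->
  is_derive x 1 (fun y => f y * g y) (f x * dg + g x * df).
Proof. move=> H1 H2; exact: is_deriveM. Qed.
Lemma xdinv {f : R -> R} {x df : R} : f x != 0 -> is_derive x 1 f df ->
  is_derive x 1 (fun y => (f y)^-1) (- (f x)^-2 * df).
Proof. move=> H1 H2; exact: is_deriveV. Qed.
Lemma xdln {f : R -> R} {x df : R} : 0 < f x -> is_derive x 1 f df ->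
  is_derive x 1 (fun y => ln (f y)) ((f x)^-1 * df).
Proof.
move=> H1 H2.
have H3 : is_derive (f x) 1 (@ln R) (f x)^-1 by exact: is_derive1_ln.
have := @is_derive1_comp R (@ln R) f x _ _ H3 H2.
by [].
Qed.
Lemma xdsum {I : eqType} (s : seq I) {F : I -> R -> R} {dF : I -> R} {x : R} :
  (forall i, is_derive x 1 (F i) (dF i)) ->
  is_derive x 1 (fun y => \sum_(i <- s) F i y) (\sum_(i <- s) dF i).
Proof.
move=> H; elim: s => [|i s IH].
  rewrite big_nil (_ : (fun y => _) = (fun _ => 0)); first exact: xdcst.
  by apply/funext => y; rewrite big_nil.
rewrite big_cons (_ : (fun y => _) = (fun y => F i y + \sum_(j <- s) F j y)).
  exact: xdadd.
by apply/funext => y; rewrite big_cons.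
Qed.
Lemma xdsq {f : R -> R} {x df : R} : is_derive x 1 f df ->
  is_derive x 1 (fun y => f y ^+ 2) (2 * f x * df).
Proof.
move=> H; have := @is_deriveX R R f 2 x 1 df H.
by rewrite expr1 /=.
Qed.
End W.


Lemma stationary (R : realType) (A : finType) (eta : R) (piref ru p : A -> R) :
  0 < eta -> (forall a, 0 < piref a) -> is_kl_maximizer eta piref ru p ->
  forall a b, ru a + piref a / (eta * p a) = ru b + piref b / (eta * p b).
Proof.
move=> heta hr [[p0 p1] ppos pmax] a b.
case: (eqVneq a b) => [-> // | nab].
pose d c : R := (c == a)%:R - (c == b)%:R.
have sumd (f : A -> R) : \sum_c f c * d c = f a - f b.
  rewrite /d; under eq_bigr do rewrite mulrBr.
  rewrite sumrB; congr (_ - _).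
    rewrite (bigD1 a) //= eqxx mulr1 big1 ?addr0 // => c /negbTE ->.
    by rewrite mulr0.
  rewrite (bigD1 b) //= eqxx mulr1 big1 ?addr0 // => c /negbTE ->.
  by rewrite mulr0.
pose q t c := p c + t * d c.
pose del := Num.min (p a) (p b).
have del0 : 0 < del by rewrite lt_min !ppos.
have qpos t : `|t| < del -> forall c, 0 < q t c.
  move=> ht c; rewrite /q /d.
  have [ta tb] : `|t| < p a /\ `|t| < p b by move: ht; rewrite lt_min => /andP.
  case: (eqVneq c a) => [->|nca].
    rewrite (negbTE nab) subr0 mulr1 -(opprK t) subr_gt0.
    by rewrite (le_lt_trans (ler_norm _)) // normrN.
  case: (eqVneq c b) => [->|ncb].
    rewrite sub0r mulrN1 subr_gt0.
    exact: le_lt_trans (ler_norm t) tb.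
  by rewrite subrr mulr0 addr0.
have qsimp t : `|t| < del -> in_simplex (q t).
  move=> ht; split; first by move=> c; apply/ltW/qpos.
  rewrite /q big_split /= -mulr_sumr p1.
  have := sumd (fun _ => 1); rewrite /= subrr => h.
  by rewrite (eq_bigr (fun c => 1 * d c)) ?h ?mulr0 ?addr0 // => c _; rewrite mul1r.
pose phi t := kl_objective eta piref ru (q t).
have q0 : q 0 = p by apply/funext => c; rewrite /q mul0r addr0.
have phimax t : t \in `]-del, del[ -> phi t <= phi 0.
  rewrite in_itv /= => /andP [h1 h2].
  have ht : `|t| < del by rewrite ltr_norml h1 h2.
  by rewrite /phi q0; apply: pmax; [apply: qsimp | apply: qpos].
pose D t := \sum_c ru c * d c - eta^-1 * \sum_c piref c *
    ((piref c / q t c)^-1 * (piref c * (- (q t c)^-2 * d c))).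
have dq (t : R) (c : A) : is_derive t (1:R) (fun y => q y c) (d c).
  rewrite /q; apply: (is_derive_eq (xdadd (xdcst _ _) (xdmul (xdid _) (xdcst _ _)))).
  by ring.
have dphi (t : R) : (forall c, 0 < q t c) -> is_derive t (1:R) phi (D t).
  move=> hq; rewrite /phi /kl_objective /KL /D.
  apply: xdsub.
    apply: xdsum => c; apply: (is_derive_eq (xdmul (xdcst _ _) (dq _ _))).
  have hs : forall c, is_derive t (1:R) (fun y => piref c * ln (piref c / q y c))
      (piref c * ((piref c / q t c)^-1 * (piref c * (- (q t c)^-2 * d c)))).
    move=> c; apply: (is_derive_eq (xdmul (xdcst _ _) (xdln _ (xdmul (xdcst _ _) (xdinv _ (dq _ _)))))).
    - by apply: divr_gt0.
    - by rewrite gt_eqF.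
    - by ring.
  apply: (is_derive_eq (xdmul (xdcst _ _) (xdsum _ hs))).
  by ring.
have H1 : is_derive (0:R) (1:R) phi 0.
  apply: (@derive1_at_max _ phi (-del) del 0).
  - have := del0; lra.
  - move=> t; rewrite in_itv /= => /andP [h1 h2].
    have ht : `|t| < del by rewrite ltr_norml h1 h2.
    by case: (dphi t (qpos t ht)).
  - by rewrite in_itv /= oppr_lt0 del0.
  - exact: phimax.
have H2 : is_derive (0:R) (1:R) phi (D 0).
  by apply: dphi; apply: qpos; rewrite normr0.
case: H1 => _ E1; case: H2 => _; rewrite E1 /D q0 => E2.
have E3 : \sum_c piref c * ((piref c / p c)^-1 * (piref c * (- (p c)^-2 * d c)))
     = \sum_c (- (piref c / p c)) * d c.
  apply: eq_bigr => c _.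
  have := ppos c; have := hr c; move=> h3 h4.
  field; apply/andP; split; by rewrite gt_eqF.
rewrite E3 !sumd in E2.
apply/eqP; rewrite -subr_eq0; apply/eqP; rewrite [RHS]E2.
have := ppos a; have := ppos b; have := hr a; have := hr b; move=> h5 h6 h7 h8.
field; rewrite !gt_eqF //.
Qed.

Section LD.
Local Open Scope classical_set_scope.
Local Open Scope ring_scope.


Lemma L_deriv (R : realType) (A : finType) (a0 : A) (eta : R) (rho gg : A -> R)
  (L : R -> R) (rv : R -> A -> R) (u : R) :
  0 < u < 1 -> (forall a, 0 < rho a) -> (forall a, -1 <= gg a <= 1) ->
  (forall z a, rv z a = rv u a - (z - u) * gg a) ->
  (forall z a, 0 <= z <= 1 -> 0 < L z - rv z a) ->
  (forall z, 0 <= z <= 1 -> \sum_a rho a / (L z - rv z a) = eta) ->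
  let N := fun z => \sum_a rho a * gg a / ((L u - rv u a) * (L z - rv z a)) in
  let D := fun z => \sum_a rho a / ((L u - rv u a) * (L z - rv z a)) in
  is_derive u 1 L (- (N u / D u)).
Proof.
move=> /andP [u0 u1] hrho hg hrv hs hsum N D.
have hu : 0 <= u <= 1 by rewrite !ltW.
have Dpos z : 0 <= z <= 1 -> 0 < D z.
  move=> hz; rewrite /D (bigD1 a0) //=.
  have h1 : 0 < rho a0 / ((L u - rv u a0) * (L z - rv z a0)).
    by apply: divr_gt0 => //; apply: mulr_gt0; apply: hs.
  have h2 : 0 <= \sum_(a | a != a0) rho a / ((L u - rv u a) * (L z - rv z a)).
    apply: sumr_ge0 => a _; apply: divr_ge0; first exact: ltW.
    by apply: mulr_ge0; apply: ltW; apply: hs.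
  lra.
have ident z : 0 <= z <= 1 -> L z - L u = - (z - u) * (N z / D z).
  move=> hz.
  have E0 : \sum_a (rho a / (L z - rv z a) - rho a / (L u - rv u a)) = 0.
    by rewrite sumrB !hsum // subrr.
  have E1 : \sum_a (rho a / (L z - rv z a) - rho a / (L u - rv u a)) =
      - ((L z - L u) * D z + (z - u) * N z).
    rewrite /D /N !mulr_sumr -big_split -sumrN; apply: eq_bigr => a _.
    have h1 := hs z a hz; have h2 := hs u a hu.
    move: h1; rewrite [rv z a]hrv => h1.
    rewrite /=; field; rewrite !gt_eqF //.
  have E : (L z - L u) * D z = - (z - u) * N z.
    move: E0; rewrite E1 => /eqP; rewrite oppr_eq0 addr_eq0 => /eqP ->.
    by rewrite mulNr.
  have Dn : D z != 0 by rewrite gt_eqF // Dpos.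
  by rewrite mulrA -E mulfK.
have lip z : 0 <= z <= 1 -> `|L z - L u| <= `|z - u|.
  move=> hz; rewrite ident // normrM normrN normrM.
  apply: ler_piMr => //.
  have Dp := Dpos z hz.
  rewrite normrV ?unitfE ?gt_eqF // (gtr0_norm Dp) ler_pdivrMr // mul1r ler_norml.
  apply/andP; split.
    rewrite /N /D -sumrN; apply: ler_sum => a _.
    have h1 := hs z a hz; have h2 := hs u a hu.
    have h3 : 0 < rho a / ((L u - rv u a) * (L z - rv z a)).
      by apply: divr_gt0 => //; apply: mulr_gt0.
    rewrite -subr_ge0 (_ : _ - _ = (1 + gg a) * (rho a / ((L u - rv u a) * (L z - rv z a)))).
      by apply: mulr_ge0 => //; [have := hg a; lra | exact: ltW].
    by field; rewrite !gt_eqF.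
  rewrite /N /D; apply: ler_sum => a _.
  have h1 := hs z a hz; have h2 := hs u a hu.
  have h3 : 0 < rho a / ((L u - rv u a) * (L z - rv z a)).
    by apply: divr_gt0 => //; apply: mulr_gt0.
  rewrite -subr_ge0 (_ : _ - _ = (1 - gg a) * (rho a / ((L u - rv u a) * (L z - rv z a)))).
    by apply: mulr_ge0 => //; [have := hg a; lra | exact: ltW].
  by field; rewrite !gt_eqF.
have near01 : \forall z \near u, 0 <= z <= 1.
  have : u \in `]0, 1[ by rewrite in_itv /= u0 u1.
  move/(near_in_itvoo (a := (0:R)) (b := 1)).
  apply: filterS => z; rewrite in_itv /= => /andP [h1 h2].
  by rewrite !ltW.
have Lc : L @ u --> L u.
  apply/cvgrPdist_le => e e0.
  have := @cvg_id _ (nbhs u); move/cvgrPdist_le => /(_ e e0) hid.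
  near=> z.
  have hz : 0 <= z <= 1 by near: z.
  have hz2 : `|u - z| <= e by near: z.
  rewrite distrC; apply: le_trans (lip z hz) _.
  by rewrite distrC.
have sc a : (fun z => L z - rv z a) @ u --> L u - rv u a.
  apply: cvgB => //.
  rewrite (_ : (fun z => rv z a) = (fun z => rv u a - (z - u) * gg a)); last first.
    by apply/funext => z; rewrite -hrv.
  rewrite [X in _ --> X](_ : _ = rv u a - (u - u) * gg a); last first.
    by rewrite subrr mul0r subr0.
  apply: cvgB; first exact: cvg_cst.
  apply: cvgM; last exact: cvg_cst.
  apply: cvgB; [exact: cvg_id | exact: cvg_cst].
have Nc : N @ u --> N u.
  rewrite /N; apply: cvg_big => //; first exact: add_continuous.
  move=> a _; apply: cvgM; first exact: cvg_cst.
  apply: cvgV; first by rewrite mulf_neq0 // gt_eqF // hs.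
  apply: cvgM; [exact: cvg_cst | exact: sc].
have Dc : D @ u --> D u.
  rewrite /D; apply: cvg_big => //; first exact: add_continuous.
  move=> a _; apply: cvgM; first exact: cvg_cst.
  apply: cvgV; first by rewrite mulf_neq0 // gt_eqF // hs.
  apply: cvgM; [exact: cvg_cst | exact: sc].
have Qc : (fun z => - (N z / D z)) @ u --> - (N u / D u).
  apply: cvgN; apply: cvgM => //; apply: cvgV => //.
  by rewrite gt_eqF // Dpos.
apply/is_derive1_caratheodory.
exists (fun z => if z == u then - (N u / D u) else (L z - L u) / (z - u)); split.
- move=> z; case: eqP => [->|/eqP nzu]; first by rewrite !subrr mulr0.
  by rewrite divfK // subr_eq0.
- rewrite /prop_for /continuous_at eqxx.
  apply: cvg_trans Qc; apply: near_eq_cvg.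
  near=> z.
  have hz : 0 <= z <= 1 by near: z.
  case: eqP => [->//|/eqP nzu].
  have nz : z - u != 0 by rewrite subr_eq0.
  have Dn : D z != 0 by rewrite gt_eqF // Dpos.
  by rewrite ident //; field; rewrite nz Dn.
- by rewrite eqxx.
Unshelve. all: by end_near.
Qed.

End LD.


Lemma final_alg (R : realType) (A : finType) (a0 : A) (eta gb : R) (rho s g : A -> R) :
  0 < eta -> (forall a, 0 < rho a) -> (forall a, 0 < s a) ->
  gb = (\sum_a rho a * g a / (s a * s a)) / (\sum_a rho a / (s a * s a)) ->
  let P := fun a => rho a / (eta * s a) in
  let dP := fun a => - rho a * eta * (g a - gb) / (eta * s a) ^+ 2 in
  let X := fun h : A -> R => \sum_a 2 * P a * dP a / rho a * h a in
  let X0 := \sum_a 2 * P a * dP a / rho a in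
  let S := fun h : A -> R => \sum_a P a ^+ 2 / rho a * h a in
  let S0 := \sum_a P a ^+ 2 / rho a in
  eta / 2 * (X (fun a => g a ^+ 2) - (2 * S g * X g / S0 - S g ^+ 2 * X0 / S0 ^+ 2))
  = - eta ^+ 2 * Z_of rho P * \sum_a mu_of rho P a *
      (w_of rho P a * (g a - \sum_a' mu_of rho P a' * g a') ^+ 3).
Proof.
move=> heta hrho hs hgb P dP X X0 S S0.
have etan : eta != 0 by rewrite gt_eqF.
have Ppos a : 0 < P a by rewrite /P divr_gt0 // mulr_gt0.
have S0pos : 0 < S0.
  rewrite /S0 (bigD1 a0) //=.
  have h1 : 0 < P a0 ^+ 2 / rho a0 by rewrite divr_gt0 // exprn_gt0.
  have h2 : 0 <= \sum_(a | a != a0) P a ^+ 2 / rho a.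
    by apply: sumr_ge0 => a _; rewrite divr_ge0 // ?exprn_ge0 // ltW.
  lra.
have S0n : S0 != 0 by rewrite gt_eqF.
pose m := S g / S0.
have muE : \sum_a' mu_of rho P a' * g a' = m.
  rewrite /m /S /mu_of /Z_of -/S0 mulr_suml; apply: eq_bigr => a _.
  by rewrite mulrAC.
have ZE : Z_of rho P = S0 by [].
have gbE : gb = m.
  have E1 : S g = eta ^- 2 * \sum_a rho a * g a / (s a * s a).
    rewrite /S mulr_sumr; apply: eq_bigr => a _; rewrite /P.
    have := hs a; have := hrho a => h1 h2.
    by field; rewrite etan !gt_eqF.
  have E0 : S0 = eta ^- 2 * \sum_a rho a / (s a * s a).
    rewrite /S0 mulr_sumr; apply: eq_bigr => a _; rewrite /P.
    have := hs a; have := hrho a => h1 h2.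
    by field; rewrite etan !gt_eqF.
  have Dn : \sum_a rho a / (s a * s a) != 0.
    by apply: contraNneq S0n; rewrite E0 => ->; rewrite mulr0.
  rewrite /m E1 E0 hgb; field; rewrite Dn.
  by rewrite etan.
pose K a := P a ^+ 2 / rho a * (P a / rho a) * (g a - m).
have XE h : X h = - 2 * eta * \sum_a K a * h a.
  rewrite /X mulr_sumr; apply: eq_bigr => a _; rewrite /K /dP /P gbE.
  have := hs a; have := hrho a => h1 h2.
  by field; rewrite etan !gt_eqF.
have X0E : X0 = - 2 * eta * \sum_a K a.
  rewrite /X0 mulr_sumr; apply: eq_bigr => a _; rewrite /K /dP /P gbE.
  have := hs a; have := hrho a => h1 h2.
  by field; rewrite etan !gt_eqF.
have S1E : S g = m * S0 by rewrite /m divfK.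
have RE : - eta ^+ 2 * Z_of rho P * \sum_a mu_of rho P a *
      (w_of rho P a * (g a - \sum_a' mu_of rho P a' * g a') ^+ 3)
    = - eta ^+ 2 * (\sum_a K a * g a ^+ 2 - 2 * m * \sum_a K a * g a + m ^+ 2 * \sum_a K a).
  rewrite muE ZE -mulrA; congr (_ * _).
  rewrite !mulr_sumr -sumrB -big_split; apply: eq_bigr => a _ /=.
  rewrite /mu_of /w_of /K -/S0 /Z_of -/S0.
  by field; rewrite S0n gt_eqF.
rewrite RE !XE X0E S1E.
by field.
Qed.

Lemma final_alg2 (R : realType) (A : finType) (a0 : A) (eta gb : R) (rho s g P dP : A -> R) :
  0 < eta -> (forall a, 0 < rho a) -> (forall a, 0 < s a) ->
  gb = (\sum_a rho a * g a / (s a * s a)) / (\sum_a rho a / (s a * s a)) ->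
  (forall a, P a = rho a / (eta * s a)) ->
  (forall a, dP a = - rho a * eta * (g a - gb) / (eta * s a) ^+ 2) ->
  eta / 2 * (\sum_a 2 * P a * dP a / rho a * g a ^+ 2 -
    (2 * (\sum_a P a ^+ 2 / rho a * g a) * (\sum_a 2 * P a * dP a / rho a * g a)
        / (\sum_a P a ^+ 2 / rho a)
     - (\sum_a P a ^+ 2 / rho a * g a) ^+ 2 * (\sum_a 2 * P a * dP a / rho a)
        / (\sum_a P a ^+ 2 / rho a) ^+ 2))
  = - eta ^+ 2 * Z_of rho P * \sum_a mu_of rho P a *
      (w_of rho P a * (g a - \sum_a' mu_of rho P a' * g a') ^+ 3).
Proof.
move=> heta hrho hs hgb hP hdP.
have -> : P = (fun a => rho a / (eta * s a)) by apply/funext.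
have -> : dP = (fun a => - rho a * eta * (g a - gb) / (eta * s a) ^+ 2) by apply/funext.
exact: (final_alg _ _ a0 _ _ _ _ _ heta hrho hs hgb).
Qed.


Theorem lemma5p3 (R : realType) (A : finType) (r rhat : A -> R) (eta : R)
    (piref : A -> R) (pi : R -> A -> R)
    (hr : forall a, 0 <= r a <= 1) (hrhat : forall a, 0 <= rhat a <= 1)
    (heta : 0 < eta)
    (hpiref : in_simplex piref) (hpiref_pos : forall a, 0 < piref a)
    (hpi : forall u : R, 0 <= u <= 1 ->
             is_kl_maximizer eta piref (r_interp r rhat u) (pi u)) :
  let g := fun a => r a - rhat a in
  forall u : R, 0 < u < 1 ->
    is_derive u (1 : R) (fun v => F_of eta piref (pi v) g)
      (- eta ^+ 2 * Z_of piref (pi u) *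
         \sum_(a : A) mu_of piref (pi u) a *
           (w_of piref (pi u) a *
              (g a - \sum_(a' : A) mu_of piref (pi u) a' * g a') ^+ 3)).
Proof.
move=> g u hu01; have /andP [u0 u1] := hu01.
have hu : 0 <= u <= 1 by rewrite !ltW.
have etan : eta != 0 by rewrite gt_eqF.
have [a0 _] : exists a0 : A, true.
  case: (pickP (fun _ : A => true)) => [a0 _|H]; first by exists a0.
  have := hpiref.2; rewrite big1 => [/eqP|a _]; first by rewrite eq_sym oner_eq0.
  by move: (H a).
pose rv v a := r_interp r rhat v a.
pose L v := rv v a0 + piref a0 / (eta * pi v a0).
have hst v : 0 <= v <= 1 -> forall a, rv v a + piref a / (eta * pi v a) = L v.
  move=> hv a; exact: (stationary _ _ _ _ _ _ heta hpiref_pos (hpi v hv) a a0).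
have hppos v a : 0 <= v <= 1 -> 0 < pi v a.
  by move=> hv; case: (hpi v hv) => _ hp _.
have hs v a : 0 <= v <= 1 -> L v - rv v a = piref a / (eta * pi v a).
  by move=> hv; rewrite -(hst v hv a); ring.
have hspos z a : 0 <= z <= 1 -> 0 < L z - rv z a.
  by move=> hz; rewrite hs // divr_gt0 // mulr_gt0 // hppos.
have hpiE v a : 0 <= v <= 1 -> pi v a = piref a / (eta * (L v - rv v a)).
  move=> hv; rewrite hs //; have := hppos v a hv; have := hpiref_pos a => h1 h2.
  by field; rewrite etan !gt_eqF.
have hsum v : 0 <= v <= 1 -> \sum_a piref a / (L v - rv v a) = eta.
  move=> hv; case: (hpi v hv) => [[_ p1] _ _].
  rewrite -[RHS]mulr1 -p1 mulr_sumr; apply: eq_bigr => a _.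
  rewrite hs //; have := hppos v a hv; have := hpiref_pos a => h1 h2.
  by field; rewrite etan !gt_eqF.
have hrv z a : rv z a = rv u a - (z - u) * g a.
  by rewrite /rv /r_interp /g; ring.
have hg a : -1 <= g a <= 1.
  by have := hr a; have := hrhat a; rewrite /g => /andP [h1 h2] /andP [h3 h4]; lra.
pose N := fun z => \sum_a piref a * g a / ((L u - rv u a) * (L z - rv z a)).
pose D := fun z => \sum_a piref a / ((L u - rv u a) * (L z - rv z a)).
have dL : is_derive u 1 L (- (N u / D u)).
  exact: (L_deriv _ _ a0 eta _ _ _ _ u hu01 hpiref_pos hg hrv hspos hsum).
pose gb := N u / D u.
pose s a := L u - rv u a.
have drv a : is_derive u 1 (fun z => rv z a) (- g a).
  rewrite (_ : (fun z => rv z a) = (fun z => rv u a - (z - u) * g a)); last first.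
    by apply/funext => z; exact: hrv.
  apply: (is_derive_eq (xdsub (xdcst _ _) (xdmul (xdsub (xdid _) (xdcst _ _)) (xdcst _ _)))).
  by ring.
have dsa a : is_derive u 1 (fun z => L z - rv z a) (- gb + g a).
  apply: (is_derive_eq (xdsub dL (drv a))).
  by rewrite /gb; ring.
pose dPv a := - piref a * eta * (g a - gb) / (eta * s a) ^+ 2.
have dP a : is_derive u 1 (fun z => piref a / (eta * (L z - rv z a))) (dPv a).
  apply: (is_derive_eq (xdmul (xdcst _ _) (xdinv _ (xdmul (xdcst _ _) (dsa a))))).
    by rewrite mulf_neq0 // gt_eqF // hspos.
  rewrite /dPv /s; have := hspos u a hu => h1.
  by field; rewrite etan gt_eqF.
pose P z a := piref a / (eta * (L z - rv z a)).
have dS (h : A -> R) : is_derive u 1 (fun z => \sum_a P z a ^+ 2 / piref a * h a)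
    (\sum_a 2 * P u a * dPv a / piref a * h a).
  apply: xdsum => a.
  apply: (is_derive_eq (xdmul (xdmul (xdsq (dP a)) (xdcst _ _)) (xdcst _ _))).
  by rewrite /P; ring.
have dS0 : is_derive u 1 (fun z => \sum_a P z a ^+ 2 / piref a)
    (\sum_a 2 * P u a * dPv a / piref a).
  apply: xdsum => a.
  apply: (is_derive_eq (xdmul (xdsq (dP a)) (xdcst _ _))).
  by rewrite /P; ring.
have S0pos : 0 < \sum_a P u a ^+ 2 / piref a.
  rewrite (bigD1 a0) //=.
  have h1 : 0 < P u a0 ^+ 2 / piref a0.
    by rewrite divr_gt0 // exprn_gt0 // divr_gt0 // mulr_gt0 // hspos.
  have h2 : 0 <= \sum_(a | a != a0) P u a ^+ 2 / piref a.
    by apply: sumr_ge0 => a _; rewrite divr_ge0 ?sqr_ge0 // ltW.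
  lra.
have hPu : pi u = P u by apply/funext => a; rewrite hpiE.
have FA := final_alg2 _ _ a0 _ _ _ _ _ (P u) dPv heta hpiref_pos (fun a => hspos u a hu)
   (erefl gb) (fun a => erefl) (fun a => erefl).
have HF : is_derive u 1 (fun z => F_of eta piref (P z) g)
      (- eta ^+ 2 * Z_of piref (pi u) *
         \sum_(a : A) mu_of piref (pi u) a *
           (w_of piref (pi u) a *
              (g a - \sum_(a' : A) mu_of piref (pi u) a' * g a') ^+ 3)).
  rewrite /F_of.
  apply: (is_derive_eq (xdmul (xdcst _ _) (xdsub (dS (fun a => g a ^+ 2))
     (xdmul (xdsq (dS g)) (xdinv _ dS0))))).
    by rewrite gt_eqF.
  rewrite hPu; apply: (etrans _ FA).
  rewrite /=.
  by field; rewrite gt_eqF.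
have near01 : \forall z \near u, 0 <= z <= 1.
  have : u \in `]0, 1[ by rewrite in_itv /= u0 u1.
  move/(near_in_itvoo (a := (0:R)) (b := 1)).
  apply: filterS => z; rewrite in_itv /= => /andP [h1 h2].
  by rewrite !ltW.
apply: (near_eq_is_derive _ HF).
near=> z.
have hz : 0 <= z <= 1 by near: z.
have -> : pi z = P z by apply/funext => a; rewrite hpiE.
by [].
Unshelve. all: by end_near.
Qed.
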